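(* Let $G$ be a $2$-connected graph not containing $K_{2,3}$ as a minor, and let $K_0$ be a connected subgraph of $G$. Then $|N(K_1)|=2$ for every component $K_1$ of $G-(K_0\cup N(K_0))$.
   Context: Graphs are simple. For a subgraph $H$ of $G$, $N(H)$ denotes the set of vertices of $G$ not in $H$ that have a neighbour in $H$; $G-(K_0\cup N(K_0))$ is obtained by deleting the vertices of $K_0$ and of $N(K_0)$. *)

(* Defs.v *)
(* A finite simple graph is a symmetric irreflexive relation
   e : rel T on a finType T. Vertex sets are {set T}. *)
From mathcomp Require Import all_boot.
Set Implicit Arguments. Unset Strict Implicit. Unset Printing Implicit Defensive.

Section Graphs.
Variables (T : finType) (e : rel T).

Definition connected_in (S : {set T}) : Prop :=
  S != set0 /\
  forall x y, x \in S -> y \in S ->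
    connect [rel a b | [&& a \in S, b \in S & e a b]] x y.

Definition nbhd (S : {set T}) : {set T} :=
  [set y | (y \notin S) && [exists x in S, e x y]].

Definition component_of (D C : {set T}) : Prop :=
  C \subset D /\ connected_in C /\
  (forall C' : {set T}, C \subset C' -> C' \subset D -> connected_in C' -> C' = C).

Definition two_connected : Prop :=
  2 < #|T| /\ connected_in [set: T] /\ (forall v : T, connected_in [set~ v]).

Definition has_K23_minor : Prop :=
  exists (a : 'I_2 -> {set T}) (b : 'I_3 -> {set T}),
    [/\ (forall i, connected_in (a i)) /\ (forall j, connected_in (b j)),
        (forall i i', i != i' -> [disjoint a i & a i']),
        (forall j j', j != j' -> [disjoint b j & b j']),
        (forall i j, [disjoint a i & b j]) &
        (forall i j, exists x y, [/\ x \in a i, y \in b j & e x y])].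

End Graphs.

(* Main.v *)
Require Import Defs.
From mathcomp Require Import all_boot.
Set Implicit Arguments. Unset Strict Implicit. Unset Printing Implicit Defensive.

Lemma exit_edge (T : finType) (r : rel T) (A : {set T}) x y :
  connect r x y -> x \in A -> y \notin A ->
  exists a b, [/\ r a b, a \in A & b \notin A].
Proof.
move/connectP=> [p]; elim: p x => [|z p IH] x /=.
  by move=> _ -> ->.
move=> /andP[rxz pz] ly xA yA.
case: (boolP (z \in A)) => zA.
  exact: (IH z pz ly zA yA).
by exists x, z.
Qed.

Lemma connect_mono (T : finType) (e : rel T) (A B : {set T}) x y :
  A \subset B ->
  connect [rel a b | [&& a \in A, b \in A & e a b]] x y ->
  connect [rel a b | [&& a \in B, b \in B & e a b]] x y.
Proof.
move=> sAB; apply: connect_sub => a b /= /and3P[aA bA eab].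
by apply: connect1; rewrite /= (subsetP sAB _ aA) (subsetP sAB _ bA).
Qed.

Theorem lemma4p2 (T : finType) (e : rel T)
  (e_sym : symmetric e) (e_irr : irreflexive e)
  (K0 K1 : {set T}) :
  two_connected e -> ~ has_K23_minor e ->
  connected_in e K0 ->
  component_of e (~: (K0 :|: nbhd e K0)) K1 ->
  #|nbhd e K1| = 2.
Proof.
move=> [_ [cT cV]] noK [K0n cK0] [sK1 [[K1n cK1] maxK1]].
have K1out : forall x, x \in K1 -> (x \notin K0) && (x \notin nbhd e K0).
  by move=> x /(subsetP sK1); rewrite !inE negb_or.
have sN : forall y, y \in nbhd e K1 -> y \in nbhd e K0.
  move=> y; rewrite inE => /andP[yK1 /existsP[x /andP[xK1 exy]]].
  have yK0 : y \notin K0.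
    apply/negP=> yK0; move: (K1out x xK1) => /andP[_].
    rewrite inE (negbTE (proj1 (andP (K1out x xK1)))) /=.
    by move/negP; apply; apply/existsP; exists y; rewrite yK0 e_sym.
  case: (boolP (y \in nbhd e K0)) => // yN.
  exfalso; move/negP: yK1; apply.
  have eq := maxK1 (y |: K1) (subsetUr _ _).
  have -> : K1 = y |: K1.
    apply/esym/eq.
    - apply/subsetP=> z; rewrite !inE => /orP[/eqP->|zK1].
        by move: yN; rewrite !inE (negbTE yK0).
      by have := subsetP sK1 z zK1; rewrite !inE.
    - split; first by apply/set0Pn; exists y; rewrite !inE eqxx.
      have hy : forall z, z \in K1 ->
        connect [rel a b | [&& a \in y |: K1, b \in y |: K1 & e a b]] y z.
        move=> z zK1; apply: (connect_trans (y := x)).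
          by apply: connect1; rewrite /= !inE eqxx xK1 orbT e_sym exy.
        by apply: (connect_mono (subsetUr _ _)); apply: cK1.
      move=> a b; rewrite !inE => /orP[/eqP->|aK1] /orP[/eqP->|bK1].
      + exact: connect0.
      + exact: hy.
      + rewrite sym_connect_sym; first exact: hy.
        by move=> u v /=; rewrite e_sym; case: (u \in _); case: (v \in _).
      + by apply: (connect_mono (subsetUr _ _)); apply: cK1.
  by rewrite !inE eqxx.
have [x xK1] := set0Pn _ K1n.
have [y yK0] := set0Pn _ K0n.
have yK1 : y \notin K1 by apply/negP=> /K1out; rewrite yK0.
have lb : forall S : {set T}, x \in S -> y \in S ->
    connect [rel a b | [&& a \in S, b \in S & e a b]] x y ->
    [disjoint S & nbhd e K1] -> False.
  move=> S xS yS cxy dS.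
  have [a [b [/= /and3P[aS bS eab] aK1 bK1]]] := exit_edge cxy xK1 yK1.
  have : b \in nbhd e K1.
    by rewrite inE bK1 /=; apply/existsP; exists a; rewrite aK1.
  by move=> bN; rewrite (disjointFr dS bS) in bN.
apply/eqP; rewrite eqn_leq; apply/andP; split.
  rewrite leqNgt; apply/negP=> gt2.
  have /card_gt0P [y1 y1N] : 0 < #|nbhd e K1| by apply: ltnW (ltnW gt2).
  have gt1 : 1 < #|nbhd e K1 :\ y1|.
    by move: gt2; rewrite (cardsD1 y1) y1N.
  have /card_gt0P [y2 y2N] := ltnW gt1.
  have gt0 : 0 < #|nbhd e K1 :\ y1 :\ y2|.
    by move: gt1; rewrite (cardsD1 y2 (nbhd e K1 :\ y1)) y2N.
  have /card_gt0P [y3 y3N] := gt0.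
  move: y2N y3N; rewrite !in_setD1 => /andP[n21 y2N] /and3P[n32 n31 y3N].
  apply: noK.
  exists (fun i : 'I_2 => if val i == 0 then K0 else K1).
  exists (fun j : 'I_3 => [set nth y1 [:: y1; y2; y3] j]).
  have Kin : forall z, z \in nbhd e K1 -> (z \notin K0) && (z \notin K1).
    move=> z zN; have := sN z zN; rewrite !inE => /andP[-> _].
    by move: zN; rewrite inE => /andP[-> _].
  have K01 : [disjoint K0 & K1].
    apply/pred0P=> z /=; apply/negbTE/negP=> /andP[zK0 zK1].
    by move: (K1out z zK1); rewrite zK0.
  have hs : forall j : 'I_3, nth y1 [:: y1; y2; y3] j \in nbhd e K1.
    by case=> [[|[|[|//]]] ?] /=.
  split.
  - split.
      by case=> [[|[|//]] ?] /=; [split|split].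
    move=> j; split; first by apply/set0Pn; exists (nth y1 [:: y1; y2; y3] j); rewrite inE.
    by move=> a b; rewrite !inE => /eqP-> /eqP->; apply: connect0.
  - by case=> [[|[|//]] ?] [[|[|//]] ?] //= _; rewrite // disjoint_sym.
  - case=> [[|[|[|//]]] ?] [[|[|[|//]]] ?] //= _; rewrite disjoints1 inE //;
      by rewrite eq_sym.
  - move=> i j; rewrite disjoint_sym disjoints1.
    by case: i => [[|[|//]] ?] /=; have := Kin _ (hs j); case/andP.
  - move=> i j; exists (if val i == 0 then
        odflt y (pick [pred z | (z \in K0) && e z (nth y1 [:: y1; y2; y3] j)])
      else odflt x (pick [pred z | (z \in K1) && e z (nth y1 [:: y1; y2; y3] j)])).
    exists (nth y1 [:: y1; y2; y3] j).
    case: i => [[|[|//]] ?] /=.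
      case: pickP => [w /andP[-> ->]|h]; first by rewrite inE.
      exfalso.
      move: (sN _ (hs j)); rewrite inE => /andP[_ /existsP[z /andP[zK0 ez]]].
      by move: (h z); rewrite /= zK0 ez.
    case: pickP => [w /andP[-> ->]|h]; first by rewrite inE.
    exfalso; move: (hs j); rewrite inE => /andP[_ /existsP[z /andP[zK0 ez]]].
    by move: (h z); rewrite /= zK0 ez.
rewrite ltnNge; apply/negP=> le1.
case: (boolP (#|nbhd e K1| == 0)) => [|n0].
  rewrite cards_eq0 => /eqP N0.
  apply: (lb setT (in_setT x) (in_setT y) ((proj2 cT) x y (in_setT x) (in_setT y))).
  by rewrite N0; apply/pred0P=> z /=; rewrite in_set0 andbF.
have /cards1P [v Nv] : #|nbhd e K1| == 1.
  by rewrite eqn_leq le1 lt0n.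
have vN : v \in nbhd e K1 by rewrite Nv inE.
have xv : x != v by apply/eqP=> xv; move: vN; rewrite -xv inE xK1.
have yv : y != v.
  by apply/eqP=> yv; move: (sN _ vN); rewrite -yv inE yK0.
have xS : x \in [set~ v] by rewrite !inE.
have yS : y \in [set~ v] by rewrite !inE.
apply: (lb [set~ v] xS yS ((proj2 (cV v)) x y xS yS)).
rewrite Nv; apply/pred0P=> z /=; rewrite !inE; by case: (z == v).
Qed.
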